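(* Let $m\geq 13$ and $k\geq 1$ be integers and let $c(x)=1+\sum_{j\in\{2,3,6\}}(x^j+x^{m-j})\in\mathbb{F}_2[x]$. Then $\gcd(c(x^k),x^m-1)=1$ if and only if $\gcd(m,3k)=\gcd(m,7k)=\gcd(m,k)$.
   Context: All polynomials are over $\mathbb{F}_2$. *)

(* Defs.v *)
From HB Require Import structures.
From mathcomp Require Import all_boot all_order all_algebra.
Set Implicit Arguments. Unset Strict Implicit. Unset Printing Implicit Defensive.
Import GRing.Theory.
Local Open Scope ring_scope.

Definition cpoly (m : nat) : {poly 'F_2} :=
  1 + \sum_(j <- [:: 2%N; 3%N; 6%N]) ('X^j + 'X^(m - j)).

(* Main.v *)
Require Import Defs.
From HB Require Import structures.
From mathcomp Require Import all_boot all_order all_algebra.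
From mathcomp Require Import ring zify.
Set Implicit Arguments. Unset Strict Implicit. Unset Printing Implicit Defensive.
Import GRing.Theory.
Local Open Scope ring_scope.

Section Gen.
Variable R : idomainType.
Implicit Types D : {poly R}.

Lemma XnB1_dvd a c : ('X^a - 1 : {poly R}) %| 'X^(a*c) - 1.
Proof.
rewrite exprM -{2}(expr1n _ c) subrXX -{2}(expr1n _ 1) expr1.
exact: dvdp_mulIl.
Qed.

Lemma XnB1_dvdn a b : (a %| b)%N -> ('X^a - 1 : {poly R}) %| 'X^b - 1.
Proof. by move/dvdnP=> [c ->]; rewrite mulnC XnB1_dvd. Qed.

Lemma gcdX D a b : (0 < a)%N -> D %| 'X^a - 1 -> D %| 'X^b - 1 ->
  D %| 'X^(gcdn a b) - 1.
Proof.
move=> ha Da Db; have [u _ /dvdnP[c hc]] := Bezoutl b ha.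
have e : ('X^(gcdn a b) - 1 : {poly R}) =
   ('X^(a * c) - 1) - 'X^(gcdn a b) * ('X^(b * u) - 1).
  by rewrite (mulnC a c) -hc exprD (mulnC b u); ring.
rewrite e; apply: dvdp_sub.
  exact: dvdp_trans Da (@XnB1_dvd a c).
exact/dvdp_mull/(dvdp_trans Db (@XnB1_dvd b u)).
Qed.
End Gen.

Section Gen2.
Variable R : idomainType.
Lemma partq (F S : {poly R}) m k q : (0 < m)%N -> (0 < k)%N -> (0 < q)%N ->
  'X^(q * k) - 1 = ('X^k - 1) * F -> F = ('X^k - 1) * S + 1 ->
  coprimep F ('X^m - 1) = (gcdn m (q * k) == gcdn m k).
Proof.
move=> hm hk hq hF hS; apply/idP/idP.
- move=> cop.
  set h := gcdn m (q * k); set g := gcdn m k.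
  have hh : (0 < h)%N by rewrite gcdn_gt0 hm.
  have hg : (0 < g)%N by rewrite gcdn_gt0 hm.
  have c1 : coprimep ('X^h - 1) F.
    rewrite coprimep_sym; apply: coprimep_dvdl cop.
    exact/XnB1_dvdn/dvdn_gcdl.
  have d1 : ('X^h - 1 : {poly R}) %| 'X^k - 1.
    rewrite -(Gauss_dvdpl _ c1) -hF; exact/XnB1_dvdn/dvdn_gcdr.
  have d2 := gcdX hk d1 (@XnB1_dvdn R _ _ (dvdn_gcdl m (q * k))).
  have nz : ('X^(gcdn k m) - 1 : {poly R}) != 0.
    by rewrite -size_poly_eq0 size_Xn_sub_1 ?gcdn_gt0 ?hk.
  have := dvdp_leq nz d2; rewrite !size_Xn_sub_1 ?gcdn_gt0 ?hk ?hm // ltnS gcdnC.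
  move=> le; rewrite eqn_leq le /=; apply: dvdn_leq => //.
  by rewrite dvdn_gcd dvdn_gcdl dvdn_mull // dvdn_gcdr.
- move=> /eqP E; apply/coprimepP => D DF Dm.
  have Dqk : D %| 'X^(q * k) - 1 by rewrite hF; exact: dvdp_mull.
  have hqk : (0 < q * k)%N by rewrite muln_gt0 hq hk.
  have := gcdX hqk Dqk Dm; rewrite gcdnC E => Dg.
  have Dk : D %| 'X^k - 1 := dvdp_trans Dg (@XnB1_dvdn R _ _ (dvdn_gcdr _ _)).
  have D1 : D %| 1.
    have -> : (1 : {poly R}) = F - ('X^k - 1) * S by rewrite hS; ring.
    by apply: dvdp_sub => //; exact: dvdp_mulr.
  by rewrite /eqp D1 dvd1p.
Qed.
End Gen2.

Lemma two0 : (2%:R : {poly 'F_2}) = 0.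
Proof.
have h : (2%:R : 'F_2) = 0 by have := pchar_Fp (isT : prime 2); move/pcharf0.
by rewrite -polyC_natr h.
Qed.

Lemma step1 (m k : nat) (hm : (13 <= m)%N) :
  let y : {poly 'F_2} := 'X^k in
  coprimep (cpoly m \Po 'X^k) ('X^m - 1) =
  coprimep (y^+12 + y^+9 + y^+8 + y^+6 + y^+4 + y^+3 + 1) ('X^m - 1).
Proof.
move=> y.
have [n hn] : exists n, m = (n + 6)%N by exists (m - 6)%N; lia.
have e2 : (m - 2 = n + 4)%N by lia.
have e3 : (m - 3 = n + 3)%N by lia.
have e6 : (m - 6 = n)%N by lia.
have cX : coprimep (y ^+ 6) ('X^m - 1 : {poly 'F_2}).
  apply: coprimep_expl; apply: coprimep_expl; rewrite coprimep_sym coprimepX.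
  by rewrite rootE !hornerE expr0n hn addn_eq0 andbF sub0r oppr_eq0 oner_eq0.
rewrite -[LHS]andTb -cX -coprimepMl.
have -> : cpoly m \Po 'X^k = 1 + (y ^+ 2 + y ^+ (n + 4)) + (y ^+ 3 + y ^+ (n + 3))
     + (y ^+ 6 + y ^+ n).
  rewrite /cpoly !big_cons big_nil e2 e3 e6 !comp_polyD !comp_Xn_poly.
  rewrite comp_poly0 -polyC1 comp_polyC addr0 /y; ring.
have : ('X^m - 1 : {poly 'F_2}) %| y ^+ m - 1.
  by rewrite /y -exprM mulnC; apply: XnB1_dvd.
move=> /dvdpP [W hW].
rewrite -[_ * (_ + _)]/(y ^+ 6 * _).
have -> : y ^+ 6 * (1 + (y ^+ 2 + y ^+ (n + 4)) + (y ^+ 3 + y ^+ (n + 3))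
     + (y ^+ 6 + y ^+ n)) = (y^+12 + y^+9 + y^+8 + y^+6 + y^+4 + y^+3 + 1)
     + (y ^+ 4 + y ^+ 3 + 1) * (y ^+ m - 1).
  rewrite hn !exprD; ring.
by rewrite hW mulrA coprimep_sym [X in coprimep _ X]addrC coprimep_addl_mul coprimep_sym.
Qed.

Lemma mod2 (a b c : {poly 'F_2}) : a = b + 2%:R * c -> a = b.
Proof. by rewrite two0 mul0r addr0. Qed.

Theorem proposition5 (m k : nat) (hm : (13 <= m)%N) (hk : (1 <= k)%N) :
  coprimep (cpoly m \Po 'X^k) ('X^m - 1)
  <-> (gcdn m (3 * k) = gcdn m k /\ gcdn m (7 * k) = gcdn m k).
Proof.
rewrite step1 //.
set y : {poly 'F_2} := 'X^k.
have m0 : (0 < m)%N by lia.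
have -> : y^+12 + y^+9 + y^+8 + y^+6 + y^+4 + y^+3 + 1 =
  (y^+2 + y + 1) ^+ 3 * (y^+6 + y^+5 + y^+4 + y^+3 + y^+2 + y + 1).
  apply: (@mod2 _ _ (- (2 * y + 5%:R * y^+2 + 8%:R * y^+3 + 11%:R * y^+4 + 13%:R * y^+5
     + 13%:R * y^+6 + 13%:R * y^+7 + 11%:R * y^+8 + 8%:R * y^+9 + 5%:R * y^+10 + 2%:R * y^+11))).
  ring.
rewrite coprimepMl coprimep_pexpl //.
rewrite (@partq _ _ y m k 3) //; last 2 first.
- by rewrite mulnC exprM -/y; ring.
- by rewrite -/y; apply: (@mod2 _ _ y); ring.
rewrite (@partq _ _ (y^+5 + y^+3 + y) m k 7) //; last 2 first.
- by rewrite mulnC exprM -/y; ring.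
- by rewrite -/y; apply: (@mod2 _ _ (y^+5 + y^+3 + y)); ring.
by split; [move=> /andP[/eqP -> /eqP ->] | move=> [-> ->]; rewrite !eqxx].
Qed.
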